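(* Let $V$ be a finite set with positive element weights ($\vert A \vert$ = total weight of $A \subseteq V$), let $\mathcal{P}, \mathcal{P}'$ be partitions of $V$ into nonempty parts, and let $P_s \ne P_t \in \mathcal{P}$. Let $\mathcal{S}_s, \mathcal{S}_t \subseteq \mathcal{P}$ with $P_s \in \mathcal{S}_s$, $P_t \in \mathcal{S}_t$ and $\mathcal{S}_s \cap \mathcal{S}_t = \emptyset$, and let $\mathcal{S} \subseteq \mathcal{P}$ with $\mathcal{S} \supseteq \mathcal{S}_s$ and $\mathcal{S} \cap \mathcal{S}_t = \emptyset$. Define $$b(\mathcal{S}_s, \mathcal{S}_t) := \sum_{P' \in \mathcal{P}'} \min\{\vert U_{\mathcal{S}_s} \cap P' \vert, \vert U_{\mathcal{S}_t} \cap P' \vert\}.$$ Then $b(\mathcal{S}_s, \mathcal{S}_t) \le \phi_{\mathcal{P}'}(\mathcal{S})$, where $\phi_{\mathcal{P}'}(\mathcal{S}) := \min_{\mathcal{S}' \subseteq \mathcal{P}'} \vert U_{\mathcal{S}} \triangle U_{\mathcal{S}'} \vert$.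
   Context: $U_{\mathcal{S}}$ denotes the union of the sets in $\mathcal{S}$; $\triangle$ is symmetric difference. *)

(* Defs.v *)
From mathcomp Require Import all_boot all_order all_algebra.
Set Implicit Arguments. Unset Strict Implicit. Unset Printing Implicit Defensive.
Import Order.TTheory GRing.Theory Num.Theory.
Local Open Scope ring_scope.

Definition wt (R : realFieldType) (T : finType) (w : T -> R) (A : {set T}) : R :=
  \sum_(x in A) w x.

Definition symdiff (T : finType) (A B : {set T}) : {set T} := (A :\: B) :|: (B :\: A).

Definition bval (R : realFieldType) (T : finType) (w : T -> R)
  (P' : {set {set T}}) (Ss St : {set {set T}}) : R :=
  \sum_(Q in P') Num.min (wt w (cover Ss :&: Q)) (wt w (cover St :&: Q)).

(* phi_{P'}(S) = min_{S' subset P'} |U_S triangle U_S'| ; the minimizer is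
   obtained with arg min over subsets S' of P' (set0 is a valid candidate). *)
Definition phi (R : realFieldType) (T : finType) (w : T -> R)
  (P' : {set {set T}}) (S : {set {set T}}) : R :=
  wt w (symdiff (cover S)
    (cover (@Order.arg_min _ R _ set0 (fun S' : {set {set T}} => S' \subset P')
      (fun S' => wt w (symdiff (cover S) (cover S')))))).

(* Main.v *)
Require Import Defs.
From mathcomp Require Import all_boot all_order all_algebra.
Import Order.TTheory GRing.Theory Num.Theory.
Local Open Scope ring_scope.

Lemma wt_mono (R : realFieldType) (T : finType) (w : T -> R) (A B : {set T}) :
  (forall x, 0 < w x) -> A \subset B -> wt w A <= wt w B.
Proof.
move=> wp /subsetP AB; rewrite /wt [X in _ <= X]big_mkcond [X in X <= _]big_mkcond /=.
apply: ler_sum => x _; case: ifP => xA; first by rewrite (AB x xA).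
by case: ifP => // _; exact: ltW.
Qed.

Lemma wt_split (R : realFieldType) (T : finType) (w : T -> R) (P' : {set {set T}}) (D : {set T}) :
  partition P' [set: T] -> wt w D = \sum_(Q in P') wt w (D :&: Q).
Proof.
case/and3P => /eqP cov triv _.
rewrite /wt big_mkcond /=.
rewrite (_ : \sum__ _ = \sum_(x in cover P') (if x \in D then w x else 0)); last first.
  by rewrite cov; apply: eq_bigl => x; rewrite inE.
rewrite (big_trivIset _ triv).
apply: eq_bigr => Q _; rewrite [RHS]big_mkcond [LHS]big_mkcond /=; apply: eq_bigr => x _.
by case: (boolP (x \in Q)) => xQ; rewrite inE ?xQ ?(negbTE xQ) ?andbT ?andbF.
Qed.

Lemma triv_eq (T : finType) (P : {set {set T}}) (A B : {set T}) x :
  trivIset P -> A \in P -> B \in P -> x \in A -> x \in B -> A = B.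
Proof.
move=> /trivIsetP t AP BP xA xB; apply/eqP; apply: contraT => nAB.
by rewrite (disjointFr (t A B AP BP nAB) xA) in xB.
Qed.

Arguments triv_eq {T P A B x}.

Theorem proposition6 (R : realFieldType) (T : finType) (w : T -> R)
  (P P' : {set {set T}}) (Ps Pt : {set T}) (Ss St S : {set {set T}}) :
  (forall x, 0 < w x) ->
  partition P [set: T] -> partition P' [set: T] ->
  Ps \in P -> Pt \in P -> Ps != Pt ->
  Ss \subset P -> St \subset P -> Ps \in Ss -> Pt \in St -> [disjoint Ss & St] ->
  S \subset P -> Ss \subset S -> [disjoint S & St] ->
  bval w P' Ss St <= phi w P' S.
Proof.
move=> wp pP pP' _ _ _ SsP StP _ _ _ SP SsS dSSt.
rewrite /phi.
set S' := Order.arg_min _ _ _.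
have S'P' : S' \subset P'.
  by rewrite /S'; case: arg_minP => //; exact: sub0set.
move: S'P'; set W := cover S' => S'P'.
have trivP : trivIset P by case/and3P: pP.
have trivP' : trivIset P' by case/and3P: pP'.
have dU : forall x, x \in cover St -> x \notin cover S.
  move=> x /bigcupP [B BSt xB]; apply/negP => /bigcupP [C CS xC].
  have BC := triv_eq trivP (subsetP StP _ BSt) (subsetP SP _ CS) xB xC.
  by rewrite -BC (disjointFl dSSt BSt) in CS.
have sU : cover Ss \subset cover S.
  apply/subsetP => x /bigcupP [B BSs xB]; apply/bigcupP; exists B => //.
  exact: (subsetP SsS).
rewrite (@wt_split _ _ w P' _ pP') /bval; apply: ler_sum => Q QP'.
case: (boolP (Q \in S')) => QS'.
- rewrite ge_min; apply/orP; right; apply: wt_mono => //.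
  apply/subsetP => x; rewrite !inE => /andP [xSt xQ].
  rewrite xQ andbT (negbTE (dU x xSt)) /=; apply/orP; right.
  by apply/bigcupP; exists Q.
- rewrite ge_min; apply/orP; left; apply: wt_mono => //.
  apply/subsetP => x; rewrite !inE => /andP [xSs xQ].
  rewrite xQ andbT (subsetP sU x xSs) /=; apply/orP; left.
  apply/andP; split => //; apply/negP => /bigcupP [C CS' xC].
  have QC := triv_eq trivP' QP' (subsetP S'P' _ CS') xQ xC.
  by move: QS'; rewrite QC CS'.
Qed.
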